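(* Let $\mathbb F$ be any field, $n\ge k>1$, let $\mathcal K\subseteq M_{n\times k}(\mathbb F)$ be a linear variety such that $\det_{n,k}(X)=0$ for all $X\in\mathcal K$, and let $B^*\subseteq[n]\times[k]$ be a cobasis of $\mathcal M(\mathcal K)$. If there exist $1\le i'\le n$ and $1\le j'\le k$ such that $|B^*\cap(\{i'\}\times[k])|=l$ and $B^*\cap([n]\times\{j'\})=\varnothing$, then there exists a linear variety $\mathcal K'\subseteq M_{(n-1)\times(k-1)}(\mathbb F)$ with $\operatorname{codim}(\mathcal K')\le\operatorname{codim}(\mathcal K)-l$ such that $\det_{n-1,k-1}(X')=0$ for all $X'\in\mathcal K'$.
   Context: A linear variety is a nonempty set $\mathbf s+V$ with $V$ a linear subspace (uniquely determined); codimension = ambient dimension minus $\dim V$. Identify $M_{n\times k}(\mathbb F)$ with $\mathbb F^{[n]\times[k]}$. Matroid $\mathcal M(\mathcal K)$ of $\mathcal K=\mathbf s+V\subseteq\mathbb F^E$: matroid on $E$ with rank function $r(S)=\dim\operatorname{span}\{x_e|_V:e\in S\}$, $x_e$ coordinate functionals; cobasis = complement of a basis. Cullis' determinant: $\det_{n,k}(X)=\sum_{c}\operatorname{sgn}(c)\det(X[c|))$, sum over $k$-subsets $c=\{c(1)<\dots<c(k)\}$ of $[n]$, $X[c|)$ the submatrix of rows in $c$, $\operatorname{sgn}(c)=(-1)^{\sum_\alpha(c(\alpha)-\alpha)}$. *)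

(* Defs.v *)
From HB Require Import structures.
From mathcomp Require Import all_boot all_order all_algebra.
Set Implicit Arguments. Unset Strict Implicit. Unset Printing Implicit Defensive.
Import GRing.Theory.
Local Open Scope ring_scope.

Definition in_variety (F : fieldType) (n k : nat)
  (s : 'M[F]_(n, k)) (V : {vspace 'M[F]_(n, k)}) (X : 'M[F]_(n, k)) : Prop :=
  X - s \in V.

Definition codim (F : fieldType) (n k : nat) (V : {vspace 'M[F]_(n, k)}) : nat :=
  (n * k - \dim V)%N.

(* Matroid M(K) on E = [n] x [k]: S is independent iff the restricted
   coordinate functionals x_e|_V (e in S) are linearly independent,
   i.e. r(S) = |S|. *)
Definition mat_indep (F : fieldType) (n k : nat) (V : {vspace 'M[F]_(n, k)})
  (S : {set 'I_n * 'I_k}) : Prop :=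
  forall c : 'I_n * 'I_k -> F,
    (forall v, v \in V -> \sum_(e in S) c e * v e.1 e.2 = 0) ->
    forall e, e \in S -> c e = 0.

Definition mat_basis (F : fieldType) (n k : nat) (V : {vspace 'M[F]_(n, k)})
  (B : {set 'I_n * 'I_k}) : Prop :=
  mat_indep V B /\ forall e, e \notin B -> ~ mat_indep V (e |: B).

Definition mat_cobasis (F : fieldType) (n k : nat) (V : {vspace 'M[F]_(n, k)})
  (Bs : {set 'I_n * 'I_k}) : Prop :=
  exists B, mat_basis V B /\ Bs = ~: B.

(* k-subsets c = {c(1) < ... < c(k)} of [n] are encoded by strictly
   increasing maps c : 'I_k -> 'I_n (0-based indices; c(a) - a unchanged). *)
Definition incr_map (n k : nat) (c : {ffun 'I_k -> 'I_n}) : bool :=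
  [forall a : 'I_k, forall b : 'I_k, (a < b)%N ==> (c a < c b)%N].

Definition cullis_det (F : fieldType) (n k : nat) (X : 'M[F]_(n, k)) : F :=
  \sum_(c : {ffun 'I_k -> 'I_n} | incr_map c)
     (-1) ^+ (\sum_(a < k) (c a - a))%N * \det (rowsub c X).

(* Main.v *)
Require Import Defs.
From HB Require Import structures.
From mathcomp Require Import all_boot all_order all_algebra.
From mathcomp Require Import zify ring.
Set Implicit Arguments. Unset Strict Implicit. Unset Printing Implicit Defensive.
Import GRing.Theory.
Local Open Scope ring_scope.

Lemma incr_ltP n k (c : {ffun 'I_k -> 'I_n}) : incr_map c ->
  forall a b : 'I_k, (c a < c b)%N = (a < b)%N.
Proof.
move=> /forallP H a b; case: (ltnP a b) => hab.
  by have := forallP (H a) b; rewrite hab.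
case: (ltngtP b a) hab => // [hba _|hba _].
  by have := forallP (H b) a; rewrite hba /= => /ltnW; rewrite leqNgt => /negbTE.
have -> : a = b by apply: val_inj.
by rewrite ltnn.
Qed.

Lemma incr_ge n k (c : {ffun 'I_k -> 'I_n}) : incr_map c -> forall a : 'I_k, (a <= c a)%N.
Proof.
move=> hc a; have [m ha] : exists m, val a = m by exists (val a).
elim: m a ha => [|m IH] a ha; first by rewrite ha.
have hm : (m < k)%N by have := ltn_ord a; rewrite ha => /ltnW.
have := IH (Ordinal hm) erefl.
have : (c (Ordinal hm) < c a)%N by rewrite incr_ltP // ha /=.
rewrite ha; move=> h1 h2; exact: leq_ltn_trans h2 h1.
Qed.

Lemma find_up m (p : pred 'I_m) : (forall x y : 'I_m, (x <= y)%N -> p x -> p y) ->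
  forall b : 'I_m, p b = (find p (enum 'I_m) <= b)%N.
Proof.
move=> up b; set f := find p (enum 'I_m).
case: (leqP f b) => hfb.
  have hf : (f < size (enum 'I_m))%N by rewrite size_enum_ord (leq_ltn_trans hfb).
  rewrite -has_find in hf.
  have hp := nth_find b hf; apply: up hp.
  by rewrite (@nth_enum_ord m b f) // -(size_enum_ord m) -has_find.
by have := before_find b hfb; rewrite nth_ord_enum.
Qed.

Lemma find_uniq m (p : pred 'I_m) a : (a <= m)%N -> (forall b : 'I_m, p b = (a <= b)%N) ->
  find p (enum 'I_m) = a.
Proof.
move=> ham hp.
have up : forall x y : 'I_m, (x <= y)%N -> p x -> p y.
  by move=> x y hxy; rewrite !hp => h; apply: leq_trans hxy.
have H := find_up up; set f := find p (enum 'I_m) in H *.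
have hf : (f <= m)%N by rewrite -(size_enum_ord m) find_size.
apply/eqP; rewrite eqn_leq; apply/andP; split; rewrite leqNgt; apply/negP => h.
  have hm : (a < m)%N by apply: leq_trans h hf.
  by have := H (Ordinal hm); rewrite hp /= leqnn leqNgt h.
have hm : (f < m)%N by apply: leq_trans h ham.
by have := H (Ordinal hm); rewrite hp /= leqnn leqNgt h.
Qed.

Lemma lift_val m (h : 'I_m) (i : 'I_m.-1) : val (lift h i) = ((h <= i) + i)%N.
Proof. by []. Qed.

Lemma lift_ltn m (h : 'I_m) (i j : 'I_m.-1) : (lift h i < lift h j)%N = (i < j)%N.
Proof. by rewrite !ltnNge /= leq_bump2. Qed.

Lemma lt_lift m (h : 'I_m) (i : 'I_m.-1) : (h < lift h i)%N = (h <= i)%N.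
Proof.
rewrite lift_val; case: (leqP h i) => H; first by rewrite add1n ltnS H.
by rewrite add0n ltnNge (ltnW H).
Qed.

Lemma lift_lt m (h : 'I_m) (i : 'I_m.-1) : (lift h i < h)%N = (i < h)%N.
Proof.
rewrite lift_val; case: (leqP h i) => H; last by rewrite add0n H.
by rewrite add1n ltnNge ltnW.
Qed.

Lemma incr_inj n k (c : {ffun 'I_k -> 'I_n}) : incr_map c -> injective c.
Proof.
move=> hc x y h; apply/val_inj; case: (ltngtP x y) => // hxy.
  by move: hxy; rewrite -(incr_ltP hc x y) h ltnn.
by move: hxy; rewrite -(incr_ltP hc y x) h ltnn.
Qed.

Definition aPsi (n' k' : nat) (i0 : 'I_n'.+1) (c' : {ffun 'I_k' -> 'I_n'}) : 'I_k'.+1 :=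
  inord (find (fun b : 'I_k' => (i0 <= c' b)%N) (enum 'I_k')).
Definition cPsi (n' k' : nat) (i0 : 'I_n'.+1) (c' : {ffun 'I_k' -> 'I_n'}) :
  {ffun 'I_k'.+1 -> 'I_n'.+1} :=
  [ffun x => if unlift (aPsi i0 c') x is Some y then lift i0 (c' y) else i0].
Definition Phi (n' k' : nat) (i0 : 'I_n'.+1) (d : 'I_n')
  (p : {ffun 'I_k'.+1 -> 'I_n'.+1} * 'I_k'.+1) : {ffun 'I_k' -> 'I_n'} :=
  [ffun y => odflt d (unlift i0 (p.1 (lift p.2 y)))].

Lemma aPsi_char n' k' (i0 : 'I_n'.+1) (c' : {ffun 'I_k' -> 'I_n'}) :
  incr_map c' -> forall b : 'I_k', (i0 <= c' b)%N = (aPsi i0 c' <= b)%N.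
Proof.
move=> hc b; rewrite /aPsi inordK; last first.
  by rewrite ltnS; apply: leq_trans (find_size _ _) _; rewrite size_enum_ord.
apply: (find_up (p := fun b : 'I_k' => (i0 <= c' b)%N)) => x y hxy h.
apply: leq_trans h _; case: (ltngtP x y) hxy => // [hl _|he _].
  by apply: ltnW; rewrite incr_ltP.
by have -> : x = y by apply: val_inj.
Qed.

Lemma cPsi_lift n' k' (i0 : 'I_n'.+1) (c' : {ffun 'I_k' -> 'I_n'}) y :
  cPsi i0 c' (lift (aPsi i0 c') y) = lift i0 (c' y).
Proof. by rewrite ffunE liftK. Qed.

Lemma cPsi_a n' k' (i0 : 'I_n'.+1) (c' : {ffun 'I_k' -> 'I_n'}) :
  cPsi i0 c' (aPsi i0 c') = i0.
Proof. by rewrite ffunE unlift_none. Qed.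

Lemma incr_cPsi n' k' (i0 : 'I_n'.+1) (c' : {ffun 'I_k' -> 'I_n'}) :
  incr_map c' -> incr_map (cPsi i0 c').
Proof.
move=> hc; have ch := aPsi_char i0 hc; set a := aPsi i0 c' in ch *.
apply/forallP => x; apply/forallP => y; apply/implyP => hxy.
case: (unliftP a x) hxy => [x' ->|->]; case: (unliftP a y) => [y' ->|->];
  rewrite ?cPsi_lift ?cPsi_a.
- by rewrite !lift_ltn incr_ltP.
- by rewrite !lift_lt ltnNge -ch -ltnNge.
- by rewrite !lt_lift ch.
- by rewrite ltnn.
Qed.

Lemma incr_of_cPsi n' k' (i0 : 'I_n'.+1) (c' : {ffun 'I_k' -> 'I_n'}) :
  incr_map (cPsi i0 c') -> incr_map c'.
Proof.
move=> hc; apply/forallP => x; apply/forallP => y; apply/implyP => hxy.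
rewrite -(lift_ltn i0) -!cPsi_lift incr_ltP //.
by rewrite lift_ltn.
Qed.

Lemma Phi_cPsi n' k' (i0 : 'I_n'.+1) d (c' : {ffun 'I_k' -> 'I_n'}) :
  Phi i0 d (cPsi i0 c', aPsi i0 c') = c'.
Proof. by apply/ffunP => y; rewrite ffunE /= cPsi_lift liftK. Qed.

Lemma Phi_prop n' k' (i0 : 'I_n'.+1) d (c : {ffun 'I_k'.+1 -> 'I_n'.+1}) a :
  incr_map c -> c a = i0 -> forall y,
  c (lift a y) = lift i0 (Phi i0 d (c, a) y) /\
  (i0 <= Phi i0 d (c, a) y)%N = (a <= y)%N.
Proof.
move=> hc ha y; rewrite ffunE /=.
case: (unliftP i0 (c (lift a y))) => [z hz|hz] /=.
  split=> //; rewrite -lt_lift -hz -{1}ha incr_ltP // lt_lift //.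
by move: hz; rewrite -ha => /(incr_inj hc) /eqP; rewrite lift_eqF.
Qed.

Lemma Psi_Phi n' k' (i0 : 'I_n'.+1) d (c : {ffun 'I_k'.+1 -> 'I_n'.+1}) a :
  incr_map c -> c a = i0 ->
  (cPsi i0 (Phi i0 d (c, a)), aPsi i0 (Phi i0 d (c, a))) = (c, a).
Proof.
move=> hc ha; have P := Phi_prop d hc ha.
have ea : aPsi i0 (Phi i0 d (c, a)) = a.
  apply/val_inj => /=; rewrite /aPsi inordK; last first.
    by rewrite ltnS; apply: leq_trans (find_size _ _) _; rewrite size_enum_ord.
  apply: find_uniq; first by rewrite -ltnS.
  by move=> b; rewrite (proj2 (P b)).
congr (_, _) => //; apply/ffunP => x; rewrite ffunE ea.
case: (unliftP a x) => [y ->|->] //.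
by rewrite (proj1 (P y)).
Qed.

Lemma sgn_cPsi n' k' (i0 : 'I_n'.+1) (c' : {ffun 'I_k' -> 'I_n'}) :
  incr_map c' ->
  (aPsi i0 c' <= i0)%N /\
  (\sum_(x < k'.+1) (cPsi i0 c' x - x))%N =
    ((i0 - aPsi i0 c') + \sum_(y < k') (c' y - y))%N.
Proof.
move=> hc; split.
  by have := incr_ge (incr_cPsi i0 hc) (aPsi i0 c'); rewrite cPsi_a.
rewrite (bigD1_ord (aPsi i0 c')) //= cPsi_a; congr (_ + _)%N.
apply: eq_bigr => y _; rewrite cPsi_lift !lift_val (aPsi_char i0 hc) subnDl //.
Qed.

Lemma cullis_expand (F : fieldType) n' k' (X : 'M[F]_(n'.+1, k'.+1))
  (i0 : 'I_n'.+1) (j0 : 'I_k'.+1) (d : 'I_n') :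
  (forall i, X i j0 = (i == i0)%:R) ->
  cullis_det X = (-1) ^+ (i0 + j0) *
     cullis_det (\matrix_(i, j) X (lift i0 i) (lift j0 j) : 'M_(n', k')).
Proof.
move=> hX; set Y := col' j0 X.
set G := fun (c : {ffun 'I_k'.+1 -> 'I_n'.+1}) (a : 'I_k'.+1) =>
  (-1) ^+ (\sum_(x < k'.+1) (c x - x))%N * ((-1) ^+ (a + j0) *
     \det (rowsub (fun y => c (lift a y)) Y)) : F.
have E1 : cullis_det X = \sum_(c | incr_map c) \sum_(a | c a == i0) G c a.
  rewrite /cullis_det; apply: eq_bigr => c hc.
  rewrite (expand_det_col _ j0) mulr_sumr [RHS]big_mkcond; apply: eq_bigr => a _.
  rewrite mxE hX /cofactor /G.
  have -> : row' a (col' j0 (rowsub c X)) = rowsub (fun y => c (lift a y)) Y.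
    by apply/matrixP => i j; rewrite !mxE.
  by case: eqP => _; rewrite ?mul1r ?mul0r ?mulr0.
rewrite E1 pair_big_dep.
rewrite (reindex_onto (fun c' => (cPsi i0 c', aPsi i0 c')) (Phi i0 d)); last first.
  by case=> c a /andP [hc /eqP ha]; apply: Psi_Phi.
rewrite /cullis_det mulr_sumr; apply: eq_big => [c'|c' hc'] /=.
  rewrite Phi_cPsi cPsi_a eqxx !andbT.
  rewrite eqxx andbT; by apply/idP/idP; [apply: incr_of_cPsi | apply: incr_cPsi].
have hc : incr_map c' by case/andP: hc' => /andP [/= /incr_of_cPsi].
rewrite /G; have [ha hs] := sgn_cPsi i0 hc; rewrite hs.
have -> : rowsub (fun y => cPsi i0 c' (lift (aPsi i0 c') y)) Y =
  rowsub c' (\matrix_(i, j) X (lift i0 i) (lift j0 j) : 'M_(n', k')).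
  by apply/matrixP => i j; rewrite !mxE cPsi_lift.
rewrite mulrA -exprD.
have -> : ((i0 - aPsi i0 c' + \sum_(y < k') (c' y - y)) + (aPsi i0 c' + j0) =
  (i0 + j0) + \sum_(y < k') (c' y - y))%N by lia.
by rewrite exprD mulrA.
Qed.

Definition maskmx (F : fieldType) n k (S : {set 'I_n * 'I_k}) (M : 'M[F]_(n, k)) : 'M[F]_(n, k) :=
  \matrix_(i, j) (if (i, j) \in S then M i j else 0).

Fact maskmx_lin (F : fieldType) n k (S : {set 'I_n * 'I_k}) : linear (@maskmx F n k S).
Proof.
move=> a A C; apply/matrixP => i j; rewrite !mxE.
by case: ifP; rewrite ?mulr0 ?addr0.
Qed.

HB.instance Definition _ (F : fieldType) n k S :=
  GRing.isLinear.Build F 'M[F]_(n, k) 'M[F]_(n, k) _ (@maskmx F n k S) (maskmx_lin S).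

Definition minor_mx (F : fieldType) n' k' (i0 : 'I_n'.+1) (j0 : 'I_k'.+1)
  (M : 'M[F]_(n'.+1, k'.+1)) : 'M[F]_(n', k') :=
  \matrix_(i, j) M (lift i0 i) (lift j0 j).

Fact minor_lin (F : fieldType) n' k' i0 j0 : linear (@minor_mx F n' k' i0 j0).
Proof. by move=> a A C; apply/matrixP => i j; rewrite !mxE. Qed.

HB.instance Definition _ (F : fieldType) n' k' i0 j0 :=
  GRing.isLinear.Build F 'M[F]_(n'.+1, k'.+1) 'M[F]_(n', k') _ (@minor_mx F n' k' i0 j0)
    (minor_lin i0 j0).

Lemma dim_supp (F : fieldType) n k (U : {vspace 'M[F]_(n, k)}) (S : {set 'I_n * 'I_k}) :
  (forall M, M \in U -> forall i j, (i, j) \notin S -> M i j = 0) -> (\dim U <= #|S|)%N.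
Proof.
move=> hU.
set X := [seq delta_mx e.1 e.2 | e <- enum S] : seq 'M[F]_(n, k).
have sub : (U <= <<X>>)%VS.
  apply/subvP => M hM.
  have -> : M = \sum_(e in S) M e.1 e.2 *: delta_mx e.1 e.2.
    apply/matrixP => i j; rewrite summxE.
    case: (boolP ((i, j) \in S)) => h.
      rewrite (bigD1 (i, j)) //= !mxE !eqxx mulr1 big1 ?addr0 //.
      move=> [e1 e2] /andP [_ he] /=; rewrite !mxE.
      have -> : ((i == e1) && (j == e2)) = false.
        apply/negbTE; apply: contra he => /andP [/eqP <- /eqP <-]; exact: eqxx.
      by rewrite mulr0.
    rewrite hU // big1 // => [[e1 e2]] he /=; rewrite !mxE.
    case: andP => [[/eqP ei /eqP ej]|_]; last by rewrite mulr0.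
    by move: h; rewrite ei ej he.
  apply: memv_suml => e he; apply: memvZ; apply: memv_span.
  by apply/mapP; exists e => //; rewrite mem_enum.
apply: leq_trans (dimvS sub) _.
by apply: leq_trans (dim_span X) _; rewrite size_map cardE.
Qed.

Lemma basis_inj (F : fieldType) n k (V : {vspace 'M[F]_(n, k)}) (B : {set 'I_n * 'I_k}) :
  mat_basis V B -> forall v, v \in V -> (forall e, e \in B -> v e.1 e.2 = 0) -> v = 0.
Proof.
move=> [hi hmax] v hv hB; apply/matrixP => i j; rewrite mxE.
apply/eqP; apply: contraT => hne.
have heB : (i, j) \notin B by apply: contra hne => /hB /= ->.
suff : False by [].
apply: (hmax _ heB) => c hc e he.
have hce : c (i, j) = 0.
  have := hc v hv; rewrite big_setU1 //= big1 ?addr0.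
    by move/eqP; rewrite mulf_eq0 (negbTE hne) orbF => /eqP.
  by move=> x /hB ->; rewrite mulr0.
have hB' : forall x, x \in B -> c x = 0.
  apply: hi => w hw; have := hc w hw; rewrite big_setU1 //= hce mul0r add0r.
  done.
move: he; rewrite in_setU1 => /orP [/eqP ->|] //; exact: hB'.
Qed.

Lemma col_surj (F : fieldType) n k (V : {vspace 'M[F]_(n, k)}) (B : {set 'I_n * 'I_k})
  (j0 : 'I_k) : mat_indep V B -> (forall i, (i, j0) \in B) ->
  forall t : 'I_n -> F, exists2 v, v \in V & forall i, v i j0 = t i.
Proof.
move=> hi hcol t.
set m := \dim V; set b := vbasis V.
set M := \matrix_(r < m, i < n) (b`_r) i j0 : 'M[F]_(m, n).
have key : forall u : 'rV[F]_n, u *m M^T = 0 -> u = 0.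
  move=> u hu.
  have hv : forall v, v \in V -> \sum_(i < n) u 0 i * v i j0 = 0.
    move=> v hv; rewrite (coord_vbasis hv).
    under eq_bigr do rewrite summxE mulr_sumr.
    rewrite exchange_big /= big1 // => r _.
    have := congr1 (fun A : 'M[F]_(1, m) => A 0 r) hu; rewrite !mxE => h.
    transitivity (coord (vbasis V) r v * \sum_i u 0 i * M^T i r); last by rewrite h mulr0.
    by rewrite mulr_sumr; apply: eq_bigr => i _; rewrite !mxE mulrCA.
  set c := fun e : 'I_n * 'I_k => if e.2 == j0 then u 0 e.1 else 0.
  have hc : forall v, v \in V -> \sum_(e in B) c e * v e.1 e.2 = 0.
    move=> v hvV; transitivity (\sum_(i < n) u 0 i * v i j0); last exact: hv.
    transitivity (\sum_(e : 'I_n * 'I_k) c e * v e.1 e.2).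
      rewrite [RHS](bigID (fun e => e \in B)) /= [X in _ + X]big1 ?addr0 //.
      move=> [i j] /= hij; rewrite /c /=; case: eqP => [ej|]; last by rewrite mul0r.
      by move: hij; rewrite ej hcol.
    rewrite -(pair_big xpredT xpredT (fun i j => c (i, j) * v i j)) /=.
    apply: eq_bigr => i _; rewrite (bigD1 j0) //= big1 ?addr0 /c /= ?eqxx //.
    by move=> j /negbTE ->; rewrite mul0r.
  apply/rowP => i; rewrite mxE.
  by have := hi c hc (i, j0) (hcol i); rewrite /c /= eqxx.
have full : row_full M.
  apply/negPn/negP => hnf.
  have hr : (\rank M < n)%N by rewrite ltn_neqAle hnf rank_leq_col.
  set K := kermx M^T.
  have hk : K != 0.
    by rewrite -mxrank_eq0 /K mxrank_ker mxrank_tr subn_eq0 -ltnNge hr.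
  case: (pickP (fun r => row r K != 0)) => [r hr'|h0].
    move/negP: hr'; apply; apply/eqP; apply: key.
    by rewrite -row_mul mulmx_ker row0.
  move/negP: hk; apply; apply/eqP/row_matrixP => r; rewrite row0.
  by have := h0 r; move/negbFE/eqP.
have : (\row_i t i <= M)%MS by rewrite submx_full.
case/submxP => D hD.
exists (\sum_(r < m) D 0 r *: b`_r).
  apply: memv_suml => r _; apply: memvZ; apply: vbasis_mem; apply: mem_nth.
  by rewrite size_tuple.
move=> i; rewrite summxE; have := congr1 (fun A : 'M[F]_(1, n) => A 0 i) hD; rewrite !mxE => ->.
by apply: eq_bigr => r _; rewrite !mxE.
Qed.

Lemma arith_fin (n' k' l t dC dW dZ dV dV2 dK dM : nat) :
  (dW + dC = dV)%N -> (dC <= n'.+1)%N -> (dZ + dV2 = dW)%N -> (dK + dM = dZ)%N ->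
  (dK <= 0)%N -> (dM <= t)%N -> (t + 1 + l = k'.+1)%N ->
  (dV <= n' * k' + n' + k' + 1)%N ->
  (n' * k' - dV2 <= n' * k' + n' + k' + 1 - dV - l)%N.
Proof. lia. Qed.

Lemma main_aux (F : fieldType) n' k' (d : 'I_n') (s : 'M[F]_(n'.+1, k'.+1))
  (V : {vspace 'M[F]_(n'.+1, k'.+1)})
  (hK : forall X, in_variety s V X -> cullis_det X = 0)
  (B : {set 'I_n'.+1 * 'I_k'.+1}) (hB : mat_basis V B) (l : nat)
  (i' : 'I_n'.+1) (j' : 'I_k'.+1)
  (hl : #|~: B :&: [set e | e.1 == i']| = l)
  (hcol : forall i, (i, j') \in B) :
  exists (s' : 'M[F]_(n', k')) (V' : {vspace 'M[F]_(n', k')}),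
    (codim V' <= codim V - l)%N /\ forall X', in_variety s' V' X' -> cullis_det X' = 0.
Proof.
have [u hu hucol] := col_surj hB.1 hcol (fun i => (i == i')%:R - s i j').
set colS := [set e : 'I_n'.+1 * 'I_k'.+1 | e.2 == j'].
set cp := linfun (@maskmx F _ _ colS).
set mn := linfun (@minor_mx F n' k' i' j').
set W := (V :&: lker cp)%VS.
exists (minor_mx i' j' (s + u)), (mn @: W)%VS.
have hW : forall w, w \in W -> w \in V /\ forall i, w i j' = 0.
  move=> w; rewrite memv_cap memv_ker lfunE /= => /andP [hw /eqP h0]; split => // i.
  by have := congr1 (fun A : 'M[F]_(n'.+1, k'.+1) => A i j') h0; rewrite !mxE inE /= eqxx.
split; last first.
  move=> X'; rewrite /in_variety => /memv_imgP [w hwW hX'].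
  have [hwV hw0] := hW w hwW.
  set X := s + (u + w).
  have hXK : cullis_det X = 0.
    by apply: hK; rewrite /in_variety /X [s + _]addrC addrK memvD.
  have hcolX : forall i, X i j' = (i == i')%:R.
    by move=> i; rewrite !mxE hucol hw0 addr0 addrC subrK.
  have := cullis_expand d hcolX; rewrite hXK => /esym/eqP.
  rewrite mulf_eq0 signr_eq0 /= => /eqP.
  have -> : \matrix_(i, j) X (lift i' i) (lift j' j) = X'.
    move/eqP: hX'; rewrite lfunE /= subr_eq => /eqP ->.
    by apply/matrixP => i j; rewrite !mxE; ring.
  done.
set rowS := [set e : 'I_n'.+1 * 'I_k'.+1 | e.1 == i'].
set T := (B :&: rowS) :\ (i', j').
have h1 := limg_ker_dim cp V.
have h2 : (\dim (cp @: V) <= n'.+1)%N.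
  apply: leq_trans (dim_supp (S := colS) _) _.
    by move=> M /memv_imgP [v _ ->] i j hij; rewrite lfunE /= mxE (negbTE hij).
  have -> : colS = setX setT [set j'] by apply/setP => [[a b]]; rewrite !inE.
  by rewrite cardsX cardsT cards1 card_ord muln1.
have h3 := limg_ker_dim mn W.
set Z := (W :&: lker mn)%VS.
set mk := linfun (@maskmx F _ _ B).
have h4 := limg_ker_dim mk Z.
have hZ : forall z, z \in Z -> [/\ z \in V, forall i, z i j' = 0 &
    forall i j, i != i' -> j != j' -> z i j = 0].
  move=> z; rewrite memv_cap memv_ker lfunE /= => /andP [/hW [hzV hz0] /eqP hm].
  split => // i j hi hj.
  rewrite eq_sym in hi; rewrite eq_sym in hj.
  have [i1 -> _] := unlift_some hi; have [j1 -> _] := unlift_some hj.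
  by have := congr1 (fun A : 'M[F]_(n', k') => A i1 j1) hm; rewrite !mxE.
have h5 : (\dim (Z :&: lker mk) <= #|(set0 : {set 'I_n'.+1 * 'I_k'.+1})|)%N.
  apply: dim_supp => M; rewrite memv_cap memv_ker lfunE /= => /andP [/hZ [hMV _ _] /eqP hm].
  suff -> : M = 0 by move=> i j _; rewrite mxE.
  apply: (basis_inj hB hMV) => [[i j]] he /=.
  by have := congr1 (fun A : 'M[F]_(n'.+1, k'.+1) => A i j) hm; rewrite !mxE he.
rewrite cards0 in h5.
have h6 : (\dim (mk @: Z) <= #|T|)%N.
  apply: dim_supp => M /memv_imgP [z /hZ [_ hz0 hzo] ->] i j hT.
  rewrite lfunE /= mxE; case: ifP => hb //.
  case: (eqVneq j j') => [->|hj]; first by rewrite hz0.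
  case: (eqVneq i i') => [ei|hi]; last by rewrite hzo.
  by move: hT; rewrite !inE hb ei eqxx /= xpair_eqE eqxx /= (negbTE hj).
have h7 : (#|T| + 1 + l = k'.+1)%N.
  have hr : #|rowS| = k'.+1.
    have -> : rowS = setX [set i'] setT by apply/setP => [[a b]]; rewrite !inE andbT.
    by rewrite cardsX cardsT cards1 card_ord mul1n.
  have e1 : rowS :&: B = B :&: rowS by rewrite setIC.
  have e2 : rowS :\: B = ~: B :&: rowS by rewrite setDE setIC.
  have := cardsID B rowS; rewrite hr e1 e2 hl.
  rewrite (cardsD1 (i', j') (B :&: rowS)) !inE hcol eqxx /= -/T.
  by rewrite [(#|T| + 1)%N]addnC.
have h8 : (\dim V <= n'.+1 * k'.+1)%N.
  by have := dimvS (subvf V); rewrite dimvf /dim /=.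
rewrite /codim.
have e : (n'.+1 * k'.+1 = n' * k' + n' + k' + 1)%N by rewrite mulSn mulnS; lia.
rewrite e in h8 *.
rewrite -/W in h1; rewrite -/Z in h3.
exact: (arith_fin h1 h2 h3 h4 h5 h6 h7 h8).
Qed.
Unset Implicit Arguments.

Theorem mainTheorem7 (F : fieldType) (n k : nat) (hk : (1 < k)%N) (hkn : (k <= n)%N)
  (s : 'M[F]_(n, k)) (V : {vspace 'M[F]_(n, k)})
  (hK : forall X, in_variety s V X -> cullis_det X = 0)
  (Bs : {set 'I_n * 'I_k}) (hB : mat_cobasis V Bs)
  (l : nat) (i' : 'I_n) (j' : 'I_k)
  (hl : #|Bs :&: [set e | e.1 == i']| = l)
  (hj : Bs :&: [set e | e.2 == j'] = set0) :
  exists (s' : 'M[F]_(n.-1, k.-1)) (V' : {vspace 'M[F]_(n.-1, k.-1)}),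
    (codim V' <= codim V - l)%N /\
    forall X', in_variety s' V' X' -> cullis_det X' = 0.
Proof.
case: hB => B [hb hBs]; subst Bs.
have hcol : forall i, (i, j') \in B.
  move=> i; have := congr1 (fun S : {set 'I_n * 'I_k} => (i, j') \in S) hj.
  by rewrite !inE /= eqxx andbT => /negbFE.
have [n0 en] : exists n0, n = n0.+2 by exists (n - 2)%N; lia.
have [k0 ek] : exists k0, k = k0.+1 by exists k.-1; lia.
subst n k.
exact: (main_aux (ord0 : 'I_n0.+1) hK hb hl hcol).
Qed.
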